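(* In the setting below, let $\alpha$ be a limit ordinal, let $\emptyset\neq x\subseteq M_\alpha$, let $I=\{\beta<\alpha: x\cap M_{\beta+1}\neq\emptyset\}$, and for $\beta\in I$ let $x_{\beta+1}=x\cap M_{\beta+1}$. Then $x\in M_{\alpha+1}$ if and only if $I\neq\emptyset$, $x=\bigcup_{\beta\in I}x_{\beta+1}$, and $x_{\beta+1}\in M_{\beta+2}$ for every $\beta\in I$.
   Context: Work in ZFA (ZF with a set $A$ of atoms, i.e. urelements that have no elements), extended by a primitive binary relation $\preccurlyeq$ on $A$, with Separation and Replacement holding for formulas mentioning $\preccurlyeq$. $A$ is an infinite set of atoms and $\preccurlyeq$ is a pre-ordering (reflexive, transitive) on $A$ with no minimal elements: for every $a\in A$ there is $b\in A$ with $b\preccurlyeq a$ and not $a\preccurlyeq b$. For $a\in A$, $pr(a)=\{b\in A:b\preccurlyeq a\}$; $LO(A,\preccurlyeq)$ is the set of nonempty $x\subseteq A$ with $pr(a)\subseteq x$ for all $a\in x$. For a set $X$ of sets, $LO(X,\subseteq)$ is the set of nonempty $x\subseteq X$ such that for every $y\in x$ and every $z\in X$ with $z\subseteq y$, $z\in x$. The magmatic hierarchy: $M_1=LO(A,\preccurlyeq)$; $M_{\alpha+1}=LO(M_\alpha,\subseteq)$ for $\alpha\geq1$; $M_\alpha=\bigcup_{1\leq\beta<\alpha}M_\beta$ for limit $\alpha$; $M=\bigcup_{\alpha\geq1}M_\alpha$. (Here $M_{0+1}=M_1$.) Limit ordinals are nonzero. *)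

(* Defs.v *)
(* A model of ZFA-style sets over a type of atoms (Aczel-style
   well-founded trees with extensional equality), ordinals given by an
   arbitrary well-ordered type with successors, and the magmatic hierarchy. *)
From Stdlib Require Import List.

Inductive V (A : Type) : Type :=
| Atom : A -> V A
| Sup : forall Ix : Type, (Ix -> V A) -> V A.
Arguments Atom {A} _.
Arguments Sup {A} _ _.

Fixpoint veq {A : Type} (x y : V A) : Prop :=
  match x with
  | Atom a => match y with Atom b => a = b | Sup _ _ => False end
  | Sup Ix f =>
      match y with
      | Atom _ => False
      | Sup J g => (forall i, exists j, veq (f i) (g j)) /\
                   (forall j, exists i, veq (f i) (g j))
      end
  end.

Definition mem {A : Type} (y x : V A) : Prop :=
  match x with
  | Atom _ => False
  | Sup Ix f => exists i, veq y (f i)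
  end.

Definition vsub {A : Type} (y z : V A) : Prop := forall w, mem w y -> mem w z.

Definition sep {A : Type} (x : V A) (P : V A -> Prop) : V A :=
  match x with
  | Atom a => Atom a
  | Sup Ix f => Sup {i : Ix | P (f i)} (fun i => f (proj1_sig i))
  end.

(** Well-ordered types with a successor function (standing in for the
    class of ordinals). *)
Record WOrd := {
  ord :> Type;
  olt : ord -> ord -> Prop;
  olt_wf : well_founded olt;
  olt_trans : forall a b c, olt a b -> olt b c -> olt a c;
  olt_total : forall a b, olt a b \/ a = b \/ olt b a;
  osucc : ord -> ord;
  osucc_lt : forall a, olt a (osucc a);
  osucc_least : forall a d, olt a d -> ~ olt d (osucc a)
}.
Arguments olt {w} _ _.
Arguments osucc {w} _.

Definition is_zero {O : WOrd} (g : O) : Prop := forall d, ~ olt d g.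
Definition is_limit {O : WOrd} (g : O) : Prop :=
  (exists d, olt d g) /\ forall b, g <> osucc b.

Definition LO_atoms {A : Type} (le : A -> A -> Prop) (x : V A) : Prop :=
  (exists y, mem y x) /\
  (forall y, mem y x -> exists a, veq y (Atom a)) /\
  (forall a b, mem (Atom a) x -> le b a -> mem (Atom b) x).

Definition LO_sub {A : Type} (X : V A -> Prop) (x : V A) : Prop :=
  (exists y, mem y x) /\
  (forall y, mem y x -> X y) /\
  (forall y z, mem y x -> X z -> vsub z y -> mem z x).

(** One step of the transfinite recursion defining M_γ
    (M_0 = ∅, M_1 = LO(A,≼), M_{β+1} = LO(M_β,⊆) for β ≥ 1,
     M_λ = ⋃_{β<λ} M_β for limit λ). *)
Definition Mbody {A : Type} (le : A -> A -> Prop) (O : WOrd) (g : O)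
    (rec : forall d : O, olt d g -> V A -> Prop) : V A -> Prop :=
  fun x =>
    (exists b (h : olt b g), g = osucc b /\
        ((is_zero b /\ LO_atoms le x) \/ (~ is_zero b /\ LO_sub (rec b h) x)))
    \/ (is_limit g /\ exists b (h : olt b g), rec b h x).

Definition Mh {A : Type} (le : A -> A -> Prop) {O : WOrd} : O -> V A -> Prop :=
  Fix (olt_wf O) (fun _ => V A -> Prop) (Mbody le O).

(* Main.v *)
Require Import Defs.
From Stdlib Require Import List FunctionalExtensionality.

Lemma veq_refl {A} (x : V A) : veq x x.
Proof. induction x; simpl; auto. split; intros i; exists i; auto. Qed.

Lemma veq_sym {A} (x y : V A) : veq x y -> veq y x.
Proof.
  revert y; induction x as [a|Ix f IH]; destruct y as [b|J g]; simpl; intros H; auto; try contradiction.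
  destruct H as [H1 H2]; split.
  - intros j; destruct (H2 j) as [i Hi]; exists i; apply IH; auto.
  - intros i; destruct (H1 i) as [j Hj]; exists j; apply IH; auto.
Qed.

Lemma veq_trans {A} (x y z : V A) : veq x y -> veq y z -> veq x z.
Proof.
  revert y z; induction x as [a|Ix f IH]; destruct y as [b|J g]; destruct z as [c|K h];
    simpl; intros H H'; try contradiction; try congruence.
  destruct H as [H1 H2]; destruct H' as [H1' H2']; split.
  - intros i; destruct (H1 i) as [j Hj]; destruct (H1' j) as [k Hk]; exists k; eapply IH; eauto.
  - intros k; destruct (H2' k) as [j Hj]; destruct (H2 j) as [i Hi]; exists i; eapply IH; eauto.
Qed.

Lemma mem_veq_r {A} (y x x' : V A) : mem y x -> veq x x' -> mem y x'.
Proof.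
  destruct x as [a|Ix f]; destruct x' as [b|J g]; simpl; intros H H'; try contradiction.
  destruct H as [i Hi]; destruct H' as [H1 H2]; destruct (H1 i) as [j Hj]; exists j; eapply veq_trans; eauto.
Qed.

Lemma veq_mem_iff {A} (x x' : V A) : veq x x' -> forall y, mem y x <-> mem y x'.
Proof. intros H y; split; intros; eapply mem_veq_r; eauto using veq_sym. Qed.

Lemma vsub_veq {A} (w y y' : V A) : vsub w y -> veq y y' -> vsub w y'.
Proof. unfold vsub; intros H E w0 Hw; eapply mem_veq_r; [apply H; exact Hw| exact E]. Qed.

Definition Sl {A} (le : A -> A -> Prop) {O : WOrd} (b : O) (x : V A) : Prop :=
  (is_zero b /\ LO_atoms le x) \/ (~ is_zero b /\ LO_sub (Mh le b) x).

Lemma Mh_eq {A} (le : A -> A -> Prop) {O : WOrd} (g : O) :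
  Mh le g = Mbody le O g (fun d _ => Mh le d).
Proof.
  unfold Mh; rewrite Fix_eq; [reflexivity|].
  intros g' f1 f2 H.
  assert (f1 = f2) by (apply functional_extensionality_dep; intro d;
                       apply functional_extensionality_dep; intro h; apply H).
  subst; reflexivity.
Qed.

Lemma Mh_unfold {A} (le : A -> A -> Prop) {O : WOrd} (g : O) x :
  Mh le g x <-> (exists b, g = osucc b /\ Sl le b x) \/
                (is_limit g /\ exists b, olt b g /\ Mh le b x).
Proof.
  rewrite Mh_eq; unfold Mbody, Sl; split.
  - intros [[b [h [E H]]]|[L [b [h H]]]]; [left; eauto | right; eauto].
  - intros [[b [E H]]|[L [b [h H]]]].
    + left; exists b; assert (h : olt b g) by (subst; apply osucc_lt); exists h; auto.
    + right; split; eauto.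
Qed.

Lemma olt_irrefl {O : WOrd} (a : O) : ~ olt a a.
Proof.
  pose proof (olt_wf O a) as W; induction W as [a _ IH]; intros H; exact (IH a H H).
Qed.

Lemma osucc_inj {O : WOrd} (a b : O) : osucc a = osucc b -> a = b.
Proof.
  intros E; destruct (olt_total O a b) as [H|[H|H]]; auto; exfalso.
  - apply (osucc_least O a b H); rewrite E; apply osucc_lt.
  - apply (osucc_least O b a H); rewrite <- E; apply osucc_lt.
Qed.

Lemma Mh_succ {A} (le : A -> A -> Prop) {O : WOrd} (b : O) x :
  Mh le (osucc b) x <-> Sl le b x.
Proof.
  rewrite Mh_unfold; split.
  - intros [[b' [E H]]|[[_ L] _]].
    + apply osucc_inj in E; subst; auto.
    + exfalso; apply (L b); reflexivity.
  - intros H; left; eauto.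
Qed.

Lemma Mh_level {A} (le : A -> A -> Prop) {O : WOrd} (g : O) x :
  Mh le g x -> exists b, Sl le b x /\ (g = osucc b \/ (is_limit g /\ olt (osucc b) g)).
Proof.
  pose proof (olt_wf O g) as W; induction W as [g _ IH]; intros H.
  apply Mh_unfold in H; destruct H as [[b [E H]]|[L [b [h H]]]].
  - exists b; auto.
  - destruct (IH b h H) as [c [Sc Ec]]; exists c; split; auto; right; split; auto.
    destruct Ec as [E|[_ E]]; [subst; auto | eapply olt_trans; eauto].
Qed.

Lemma Mh_of_level {A} (le : A -> A -> Prop) {O : WOrd} (g b : O) x :
  Sl le b x -> (g = osucc b \/ (is_limit g /\ olt (osucc b) g)) -> Mh le g x.
Proof.
  intros S [E|[L E]].
  - subst; apply Mh_succ; auto.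
  - apply Mh_unfold; right; split; auto; exists (osucc b); split; auto; apply Mh_succ; auto.
Qed.

Lemma Sl_nonempty {A} (le : A -> A -> Prop) {O : WOrd} (b : O) x :
  Sl le b x -> exists y, mem y x.
Proof. intros [[_ [H _]]|[_ [H _]]]; auto. Qed.

Lemma Mh_nonempty {A} (le : A -> A -> Prop) {O : WOrd} (g : O) x :
  Mh le g x -> exists y, mem y x.
Proof. intros H; destruct (Mh_level le g x H) as [b [S _]]; eapply Sl_nonempty; eauto. Qed.

Lemma Sl_inv {A} (le : A -> A -> Prop) {O : WOrd} (b : O) x x' :
  (forall y, mem y x <-> mem y x') -> Sl le b x -> Sl le b x'.
Proof.
  unfold Sl, LO_atoms, LO_sub; intros H [[Z [[y Hy] [Ha Hd]]]|[Z [[y Hy] [Ha Hd]]]].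
  - left; split; auto; split; [exists y; apply H; auto|split].
    + intros y' Hy'; apply Ha, H; auto.
    + intros a c Hab Hl; apply H; apply Hd with a; auto; apply H; auto.
  - right; split; auto; split; [exists y; apply H; auto|split].
    + intros y' Hy'; apply Ha, H; auto.
    + intros y' z Hy' Hz Hs; apply H; apply Hd with y'; auto; apply H; auto.
Qed.

Lemma Mh_veq {A} (le : A -> A -> Prop) {O : WOrd} (g : O) x x' :
  Mh le g x -> veq x x' -> Mh le g x'.
Proof.
  intros H E; destruct (Mh_level le g x H) as [b [S L]].
  eapply Mh_of_level; [|exact L]. eapply Sl_inv; [|exact S]. apply veq_mem_iff; auto.
Qed.

Lemma Mh_not_atom {A} (le : A -> A -> Prop) {O : WOrd} (g : O) y a :
  Mh le g y -> veq y (Atom a) -> False.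
Proof.
  intros H E; destruct (Mh_nonempty le g y H) as [z Hz]; exact (mem_veq_r z y _ Hz E).
Qed.

Lemma Mh_down {A} (le : A -> A -> Prop) {O : WOrd} (u : V A) :
  forall w (g d : O), Mh le g w -> Mh le d u -> vsub w u -> Mh le d w.
Proof.
  induction u as [a|Ix f IH]; intros w g d Hw Hu Hs.
  - exfalso; destruct (Mh_nonempty le d _ Hu) as [y Hy]; exact Hy.
  - destruct (Mh_level le d _ Hu) as [b [Sb Eb]].
    destruct (Mh_level le g _ Hw) as [c [Sc Ec]].
    apply (Mh_of_level le d b); auto.
    destruct Sb as [[Zb Lb]|[Zb Lb]].
    + left; split; auto.
      destruct Sc as [[Zc Lc]|[Zc Lc]]; auto; exfalso.
      destruct Lc as [[y Hy] [Ec' _]].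
      destruct Lb as [_ [Ab _]].
      destruct (Ab y (Hs y Hy)) as [a Ha].
      exact (Mh_not_atom le c y a (Ec' y Hy) Ha).
    + right; split; auto.
      destruct Lb as [Nb [Eb' Db]].
      split; [exact (Mh_nonempty le g w Hw)|split].
      * intros y Hy; apply Eb'; apply Hs; auto.
      * intros y z Hy Hz Hzy.
        destruct Sc as [[Zc Lc]|[Zc Lc]].
        -- exfalso. destruct Lc as [_ [Ac _]].
           destruct (Ac y Hy) as [a Ha].
           exact (Mh_not_atom le b y a (Eb' y (Hs y Hy)) Ha).
        -- destruct Lc as [_ [Ec' Dc]].
           apply Dc with y; auto.
           destruct (Hs y Hy) as [i Hi].
           apply (IH i z b c Hz).
           ++ eapply Mh_veq; [apply Ec'; exact Hy | exact Hi].
           ++ eapply vsub_veq; eauto.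
Qed.

Theorem proposition4p9 (A : Type) (le : A -> A -> Prop) (O : WOrd) :
  (forall l : list A, exists a, ~ In a l) ->
  (forall a, le a a) ->
  (forall a b c, le a b -> le b c -> le a c) ->
  (forall a, exists b, le b a /\ ~ le a b) ->
  forall (alpha : O) (x : V A),
    is_limit alpha ->
    (exists y, mem y x) ->
    (forall y, mem y x -> Mh le alpha y) ->
    let I := fun b : O => olt b alpha /\ exists z, mem z x /\ Mh le (osucc b) z in
    let xs := fun b : O => sep x (Mh le (osucc b)) in
    Mh le (osucc alpha) x <->
      ((exists b, I b) /\
       (forall z, mem z x <-> exists b, I b /\ mem z (xs b)) /\
       (forall b, I b -> Mh le (osucc (osucc b)) (xs b))).
Proof.
  intros _ _ _ _ alpha x Hlim Hne Hsub.
  cbv zeta.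
  assert (Hnz : ~ is_zero alpha).
  { destruct Hlim as [[d Hd] _]; intro Z; apply (Z d Hd). }
  assert (Hsl : forall b, olt b alpha -> olt (osucc b) alpha).
  { intros b Hb; destruct (olt_total O (osucc b) alpha) as [H|[H|H]]; auto; exfalso.
    - apply ((proj2 Hlim) b); auto.
    - apply (osucc_least O b alpha Hb H). }
  assert (Halpha : forall z, Mh le alpha z <-> exists c, olt c alpha /\ Mh le (osucc c) z).
  { intros z; split.
    - intros H; destruct (Mh_level le alpha z H) as [c [Sc [E|[_ E]]]].
      + exfalso; apply ((proj2 Hlim) c); auto.
      + exists c; split; [eapply olt_trans; [apply osucc_lt|exact E] | apply Mh_succ; auto].
    - intros [c [Hc H]]; apply (Mh_of_level le alpha c); [apply Mh_succ; auto|].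
      right; auto. }
  assert (Hxs : forall (b : O) z, mem z (sep x (Mh le (osucc b))) <-> mem z x /\ Mh le (osucc b) z).
  { intros b z. destruct x as [a|Ix f]; [destruct Hne as [? []]|].
    simpl; split.
    - intros [[i Pi] Hi]; simpl in Hi; split; [exists i; auto|].
      eapply Mh_veq; [exact Pi| apply veq_sym; exact Hi].
    - intros [[i Hi] HM]. exists (exist _ i (Mh_veq le (osucc b) _ _ HM Hi)); simpl; auto. }
  assert (Hsucc : Mh le (osucc alpha) x <-> LO_sub (Mh le alpha) x).
  { rewrite Mh_succ; unfold Sl; tauto. }
  assert (Hxsucc : forall b : O, Mh le (osucc (osucc b)) (sep x (Mh le (osucc b))) <->
                             LO_sub (Mh le (osucc b)) (sep x (Mh le (osucc b)))).
  { intros b; rewrite Mh_succ; unfold Sl.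
    assert (~ is_zero (osucc b)) by (intro Z; apply (Z b), osucc_lt). tauto. }
  rewrite Hsucc; split.
  - intros [_ [_ D]]; split; [|split].
    + destruct Hne as [y Hy]. destruct (proj1 (Halpha y) (Hsub y Hy)) as [c [Hc Hm]].
      exists c; split; eauto.
    + intro z; split.
      * intro Hz; destruct (proj1 (Halpha z) (Hsub z Hz)) as [c [Hc Hm]].
        exists c; split; [split; eauto|apply Hxs; auto].
      * intros [b [_ Hz]]; apply Hxs in Hz; tauto.
    + intros b [Hb [z [Hz Hmz]]]. apply Hxsucc. split; [exists z; apply Hxs; auto|split].
      * intros y Hy; apply Hxs in Hy; tauto.
      * intros y z' Hy Hz' Hzy. apply Hxs in Hy. apply Hxs. split; auto.
        apply D with y; [tauto| |exact Hzy]. apply Halpha; eauto.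
  - intros [[b0 Ib0] [Hu Hc]]. split; [auto|split; [auto|]].
    intros y z Hy Hz Hzy. destruct (proj1 (Hu y) Hy) as [b [Ib Hyb]].
    pose proof (Hc b Ib) as Hb. apply Hxsucc in Hb. destruct Hb as [_ [_ D]].
    assert (Hzb : Mh le (osucc b) z).
    { apply (Mh_down le y z alpha (osucc b)); auto. apply Hxs in Hyb; tauto. }
    exact (proj1 (proj1 (Hxs b z) (D y z Hyb Hzb Hzy))).
Qed.
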